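(* Let $\mathcal G=(V,E)$ be a finite connected undirected graph with strictly positive edge weights, let $d$ denote the weighted shortest-path distance, and let $\mathcal O\subseteq V$. Suppose that for every $u\in V$ there exist $o_1,o_2\in\mathcal O$ such that there is a unique shortest path $\mathcal P(o_1,o_2)$ between $o_1$ and $o_2$ and $u$ lies on $\mathcal P(o_1,o_2)$. Then $\mathcal O$ is a double resolving set of $\mathcal G$, i.e., for any two distinct nodes $x,y\in V$ there exist $u,v\in\mathcal O$ such that $d(x,u)-d(x,v)\neq d(y,u)-d(y,v)$.
   Context: A set $S\subseteq V$ is a double resolving set (DRS) of $\mathcal G$ if for any two distinct $x,y\in V$ there exist $u,v\in S$ with $d(x,u)-d(x,v)\ne d(y,u)-d(y,v)$. *)

(* Defs.v *)
From HB Require Import structures.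
From mathcomp Require Import all_boot all_order all_algebra.
Set Implicit Arguments. Unset Strict Implicit. Unset Printing Implicit Defensive.
Import Order.TTheory GRing.Theory Num.Theory.
Local Open Scope ring_scope.

Section WeightedGraph.
Variables (R : realFieldType) (V : finType).
Variable (e : rel V) (w : V -> V -> R).

Definition weighted_graph : Prop :=
  [/\ symmetric e, irreflexive e,
      (forall x y, w x y = w y x) & (forall x y, e x y -> 0 < w x y)].

Definition connected_graph : Prop := forall x y : V, connect e x y.

Definition walk (x y : V) (p : seq V) : Prop := path e x p /\ last x p = y.

Definition wlen (x : V) (p : seq V) : R :=
  \sum_(ab <- zip (x :: p) p) w ab.1 ab.2.

Definition is_sp_dist (d : V -> V -> R) : Prop :=
  forall x y : V,
    (exists p, walk x y p /\ wlen x p = d x y) /\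
    (forall p, walk x y p -> d x y <= wlen x p).

Definition shortest_path (d : V -> V -> R) (x y : V) (p : seq V) : Prop :=
  walk x y p /\ wlen x p = d x y.

Definition on_unique_sp (d : V -> V -> R) (o1 o2 u : V) : Prop :=
  exists p, [/\ shortest_path d o1 o2 p,
                (forall q, shortest_path d o1 o2 q -> q = p)
              & u \in o1 :: p].

Definition double_resolving (d : V -> V -> R) (S : {set V}) : Prop :=
  forall x y : V, x != y ->
    exists u v, [/\ u \in S, v \in S & d x u - d x v != d y u - d y v].

End WeightedGraph.

(* Main.v *)
Require Import Defs.
From HB Require Import structures.
From mathcomp Require Import all_boot all_order all_algebra.
From mathcomp Require Import lra.
Set Implicit Arguments. Unset Strict Implicit. Unset Printing Implicit Defensive.
Import Order.TTheory GRing.Theory Num.Theory.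
Local Open Scope ring_scope.

Section Aux.
Variables (R : realFieldType) (V : finType) (e : rel V) (w : V -> V -> R).

Lemma wlen_nil x : wlen w x [::] = 0.
Proof. by rewrite /wlen big_nil. Qed.

Lemma wlen_cons x a p : wlen w x (a :: p) = w x a + wlen w a p.
Proof. by rewrite /wlen /= big_cons. Qed.

Lemma wlen_cat x p q : wlen w x (p ++ q) = wlen w x p + wlen w (last x p) q.
Proof.
elim: p x => [|a p IH] x /=; first by rewrite wlen_nil add0r.
by rewrite !wlen_cons IH addrA.
Qed.

Hypothesis wpos : forall x y, e x y -> 0 < w x y.
Hypothesis wsym : forall x y, w x y = w y x.
Hypothesis esy : symmetric e.

Lemma wlen_ge0 x p : path e x p -> 0 <= wlen w x p.
Proof.
elim: p x => [|a p IH] x /=; first by rewrite wlen_nil.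
case/andP=> hxa hp; rewrite wlen_cons; have := wpos hxa; have := IH _ hp; lra.
Qed.

Lemma wlen_gt0 x p : path e x p -> p != [::] -> 0 < wlen w x p.
Proof.
case: p => [|a p] //= /andP[hxa hp] _; rewrite wlen_cons.
have := wpos hxa; have := wlen_ge0 hp; lra.
Qed.

Lemma last_rev_belast (x : V) p : last (last x p) (rev (belast x p)) = x.
Proof. by case: p => [|a p] //=; rewrite rev_cons last_rcons. Qed.

Lemma wlen_rev x p : wlen w (last x p) (rev (belast x p)) = wlen w x p.
Proof.
elim: p x => [|a p IH] x //=.
rewrite rev_cons -cats1 wlen_cat IH last_rev_belast wlen_cons wlen_nil.
by rewrite wlen_cons wsym addr0 addrC.
Qed.

Lemma walk_rev x y p : walk e x y p -> walk e y x (rev (belast x p)).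
Proof.
case=> hp hl; rewrite /walk -hl last_rev_belast; split=> //.
rewrite rev_path; rewrite (@eq_path _ _ e) // => a b /=; by rewrite esy.
Qed.

Variable d : V -> V -> R.
Hypothesis hd : is_sp_dist e w d.

Lemma d_le x y p : walk e x y p -> d x y <= wlen w x p.
Proof. by move=> h; apply: (hd x y).2. Qed.

Lemma d_sym x y : d x y = d y x.
Proof.
have gen : forall a b, d a b <= d b a.
  move=> a b; have [[p [hw hl]] _] := hd b a.
  rewrite -hl; move: (walk_rev hw); case: hw => _ hl2; rewrite -hl2 => /d_le; by rewrite wlen_rev.
by apply/eqP; rewrite eq_le !gen.
Qed.

Lemma d_tri x y z : d x z <= d x y + d y z.
Proof.
have [[p [[hp hpl] hl]] _] := hd x y; have [[q [[hq hql] hq2]] _] := hd y z.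
have hw : walk e x z (p ++ q).
  by split; rewrite ?cat_path ?last_cat hpl ?hp ?hq.
by have := d_le hw; rewrite wlen_cat hpl hl hq2.
Qed.

Lemma sp_split x y p z : shortest_path e w d x y p -> z \in x :: p ->
  exists r1 r2, [/\ p = r1 ++ r2, last x r1 = z, wlen w x r1 = d x z
     & d x y = d x z + d z y].
Proof.
case=> [[hp hl] hlen] hz; move: hp hl hlen; case/splitPl: hz => r1 r2 hr1.
rewrite cat_path last_cat wlen_cat hr1 => /andP[h1 h2] hl hlen.
have a1 := d_le (conj h1 hr1); have a2 := d_le (conj h2 hl).
have := d_tri x z y => a3.
exists r1, r2; split => //; lra.
Qed.

Lemma cat_prefix (r1 r2 s1 s2 : seq V) : r1 ++ r2 = s1 ++ s2 ->
  (exists t, s1 = r1 ++ t) \/ (exists t, r1 = s1 ++ t).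
Proof.
elim: r1 s1 => [|a r1 IH] s1; first by left; exists s1.
case: s1 => [|b s1] /=; first by right; exists (a :: r1).
case=> -> /IH [[t ->]|[t ->]]; [left|right]; by exists t.
Qed.

Lemma prefix_contra o p r1 r2 s1 s2 : path e o p -> p = r1 ++ r2 -> p = s1 ++ s2 ->
  wlen w o r1 = wlen w o s1 -> last o r1 = last o s1.
Proof.
move=> hp e1 e2 hw.
have [[t ht]|[t ht]] := cat_prefix (etrans (esym e1) e2).
- rewrite ht last_cat; move: hw; rewrite ht wlen_cat => hw.
  have hpt : path e (last o r1) t.
    by move: hp; rewrite e2 ht -catA cat_path => /andP[_]; rewrite cat_path => /andP[].
  case: t {ht} hw hpt => [|a t] hw hpt; first by [].
   exfalso; have := wlen_gt0 hpt isT; lra.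
- rewrite ht last_cat; move: hw; rewrite ht wlen_cat => hw.
  have hpt : path e (last o s1) t.
    by move: hp; rewrite e1 ht -catA cat_path => /andP[_]; rewrite cat_path => /andP[].
  case: t {ht} hw hpt => [|a t] hw hpt; first by [].
   exfalso; have := wlen_gt0 hpt isT; lra.
Qed.

End Aux.

Theorem lemma2 (R : realFieldType) (V : finType) (e : rel V) (w : V -> V -> R)
  (d : V -> V -> R) (O : {set V}) :
  weighted_graph e w ->
  connected_graph e ->
  is_sp_dist e w d ->
  (forall u : V, exists o1 o2, [/\ o1 \in O, o2 \in O & on_unique_sp e w d o1 o2 u]) ->
  double_resolving d O.
Proof.
case=> esy _ wsym wpos _ hd hO x y xy.
case: (boolP [exists u, exists v, [&& u \in O, v \in O & d x u - d x v != d y u - d y v]]).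
  case/existsP=> u /existsP[v /and3P[hu hv hn]]; by exists u, v.
rewrite negb_exists => /forallP H.
have HD : forall u v, u \in O -> v \in O -> d x u - d y u = d x v - d y v.
  move=> u v hu hv; have := H u; rewrite negb_exists => /forallP/(_ v).
  rewrite hu hv /= negbK => /eqP; lra.
have dsym := d_sym wsym esy hd.
have tri := d_tri hd.
have [o1 [o2 [ho1 ho2 [p [hsp huniq hxp]]]]] := hO x.
have [o1' [o2' [ho1' ho2' [q [hsq _ hyq]]]]] := hO y.
have [r1 [r2 [er hr1 hwr1 dx]]] := sp_split hd hsp hxp.
have [_ [_ [_ _ _ dy]]] := sp_split hd hsq hyq.
have t1 := tri o1 y o2; have t2 := tri o1' x o2'.
have c1 := HD _ _ ho1 ho2; have c2 := HD _ _ ho1 ho1'; have c3 := HD _ _ ho1 ho2'.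
have E1 := dsym o1 x; have E2 := dsym o1 y; have E3 := dsym o1' x; have E4 := dsym o1' y.
have eq1 : d o1 y = d o1 x by lra.
have eq2 : d o1 o2 = d o1 y + d y o2 by lra.
have [[s1 [[hs1 hs1l] hs1w]] _] := hd o1 y.
have [[s2 [[hs2 hs2l] hs2w]] _] := hd y o2.
have hs : shortest_path e w d o1 o2 (s1 ++ s2).
  split; first by split; rewrite ?cat_path ?last_cat hs1l ?hs1 ?hs2.
  by rewrite wlen_cat hs1l hs1w hs2w eq2.
have ep := huniq _ hs.
have hpp : path e o1 p by case: hsp => [[]].
have := prefix_contra wpos hpp er (esym ep).
rewrite hr1 hs1l hwr1 hs1w eq1 => /(_ erefl) exy.
by rewrite exy eqxx in xy.
Qed.
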